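(* Let $(V_i)_{i\in I}$ be a set of $n$-parameter persistence modules such that $\prod_{i\in I}V_i$ is q-tame. Then the canonical map $\varphi:\bigoplus_{i\in I}V_i\to\prod_{i\in I}V_i$ is a weak equivalence, i.e. $\ker\varphi$ and $\operatorname{cok}\varphi$ are ephemeral.
   Context: Fix a field $\mathbb{k}$. An $n$-parameter persistence module is a functor $V:\mathbf{R}^n\to\mathbf{Vect}_{\mathbb{k}}$ ($\mathbf{R}^n$ with componentwise order), structure maps $V_{s,t}$. Write $s\ll t$ if $s_i<t_i$ for all $i$. $V$ is q-tame if $V_{s,t}$ has finite rank whenever $s\ll t$, and ephemeral if $V_{s,t}=0$ whenever $s\ll t$. Direct sums and products are computed pointwise. *)

(* Defs.v *)
From HB Require Import structures.
From Stdlib Require Import Reals.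
From Stdlib Require List.
From mathcomp Require Import all_boot all_algebra.
Unset Printing Implicit Defensive.
Import GRing.Theory.
Local Open Scope ring_scope.

Definition pt (n : nat) := 'I_n -> R.

Definition ple {n} (s t : pt n) : Prop := forall i, Rle (s i) (t i).
Definition pll {n} (s t : pt n) : Prop := forall i, Rlt (s i) (t i).

(* An n-parameter persistence module over the field K: a functor
   R^n -> Vect_K.  [pm_map s t] is the structure map V_{s,t}; it is only
   meaningful (and only constrained) when s <= t. *)
Record pmod (K : fieldType) (n : nat) := PMod {
  pm_sp : pt n -> lmodType K;
  pm_map : forall s t : pt n, {linear pm_sp s -> pm_sp t};
  pm_id : forall s (x : pm_sp s), pm_map s s x = x;
  pm_comp : forall s t u (x : pm_sp s), ple s t -> ple t u ->
      pm_map t u (pm_map s t x) = pm_map s u x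
}.
Arguments pm_sp {K n} _ _.
Arguments pm_map {K n} _ _ _.

Definition prod_elt {K n} {I : Type} (V : I -> pmod K n) (s : pt n) :=
  forall i : I, pm_sp (V i) s.

Definition prod_map {K n I} (V : I -> pmod K n) (s t : pt n)
  (x : prod_elt V s) : prod_elt V t := fun i => pm_map (V i) s t (x i).

(* An element of the product lies in the direct sum iff it has finite
   support. *)
Definition fin_supp {K n I} (V : I -> pmod K n) (s : pt n) (x : prod_elt V s)
  : Prop := exists J : seq I, forall i, ~ List.In i J -> x i = 0.

Definition prod_finite_rank {K n I} (V : I -> pmod K n) (s t : pt n)
  (f : prod_elt V s -> prod_elt V t) : Prop :=
  exists xs : seq (prod_elt V t), forall u : prod_elt V s,
    exists c : 'I_(size xs) -> K,
      forall i, f u i = \sum_(j < size xs) c j *: (nth (fun _ => 0) xs j) i.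

Definition prod_qtame {K n I} (V : I -> pmod K n) : Prop :=
  forall s t : pt n, pll s t -> prod_finite_rank V s t (prod_map V s t).

(* The canonical map phi : (+)_i V_i -> prod_i V_i sends a finitely supported
   family x to itself. *)

(* ker phi is ephemeral: for s << t, the induced map ker phi_s -> ker phi_t
   (restriction of the direct-sum structure map) is zero. *)
Definition ker_canon_ephemeral {K n I} (V : I -> pmod K n) : Prop :=
  forall s t : pt n, pll s t ->
    forall x : prod_elt V s, fin_supp V _ x -> (forall i, x i = 0) ->
      forall i, pm_map (V i) s t (x i) = 0.

(* cok phi is ephemeral: for s << t, the induced map cok phi_s -> cok phi_t
   is zero, i.e. prod_{s,t} maps every y into im phi_t. *)
Definition cok_canon_ephemeral {K n I} (V : I -> pmod K n) : Prop :=
  forall s t : pt n, pll s t ->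
    forall y : prod_elt V s,
      exists x : prod_elt V t, fin_supp V _ x /\ (forall i, x i = prod_map V s t y i).

Definition canon_weak_equiv {K n I} (V : I -> pmod K n) : Prop :=
  ker_canon_ephemeral V /\ cok_canon_ephemeral V.

(* Main.v *)
Require Import Defs.
From mathcomp Require Import all_boot all_algebra.
From Stdlib Require Import Classical ClassicalEpsilon.
From Stdlib Require List.
Import GRing.Theory.
Local Open Scope ring_scope.

Lemma size_length (T : Type) (l : seq T) : size l = List.length l.
Proof. by elim: l => //= a l ->. Qed.

Section Bad.
Variables (K : fieldType) (n : nat) (I : Type) (V : I -> pmod K n) (s t : pt n).

Definition bad (i : I) := exists v, pm_map (V i) s t v <> 0%R.

Definition g (i : I) : pm_sp (V i) s :=
  match excluded_middle_informative (bad i) with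
  | left h => proj1_sig (constructive_indefinite_description _ h)
  | right _ => 0%R
  end.

Lemma g_spec i : bad i -> pm_map (V i) s t (g i) <> 0%R.
Proof.
rewrite /g => h; case: excluded_middle_informative => // h'.
exact: (proj2_sig (constructive_indefinite_description _ h')).
Qed.

Lemma bad_bound (xs : seq (prod_elt V t)) :
  (forall u : prod_elt V s, exists c : 'I_(size xs) -> K,
      forall i, prod_map V s t u i = (\sum_(j < size xs) c j *: (nth (fun _ => 0%R) xs j) i)%R) ->
  forall L : seq I, List.NoDup L -> (forall i, List.In i L -> bad i) -> (size L <= size xs)%N.
Proof.
move=> H L ND HL.
case: L ND HL => [//|d L0] ND HL.
set L := d :: L0 in ND HL *.
set m := size L; set N := size xs.
pose idx (k : 'I_m) := List.nth k L d.
have idx_inj : forall k p, idx k = idx p -> k = p.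
  move=> k p e; apply: val_inj => /=.
  move: ND => /(List.NoDup_nth L d) ND; apply: ND => //.
  - by apply/ltP; rewrite -size_length.
  - by apply/ltP; rewrite -size_length.
have idx_bad : forall k, bad (idx k).
  move=> k; apply: HL; apply: List.nth_In; apply/ltP; rewrite -size_length; exact: ltn_ord.
pose u (k : 'I_m) : prod_elt V s := fun i =>
  if excluded_middle_informative (i = idx k) then g i else 0%R.
pose cf (k : 'I_m) := proj1_sig (constructive_indefinite_description _ (H (u k))).
have cfP : forall k i, prod_map V s t (u k) i =
   (\sum_(j < N) cf k j *: (nth (fun _ => 0%R) xs j) i)%R.
  move=> k; exact: (proj2_sig (constructive_indefinite_description _ (H (u k)))).
pose M : 'M[K]_(m, N) := \matrix_(k, j) cf k j.
rewrite leqNgt; apply/negP => Hlt.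
have : kermx M != 0%R.
  rewrite kermx_eq0 -row_leq_rank -ltnNge.
  exact: leq_ltn_trans (rank_leq_col M) Hlt.
move=> Hk.
have [r Hr] : exists r, row r (kermx M) != 0%R.
  apply: NNPP => hn; move/eqP: Hk; apply; apply/row_matrixP => r.
  rewrite row0; apply/eqP; apply: NNPP => h; apply: hn; by exists r; apply/negP.
set a := row r (kermx M) in Hr.
have aM : (a *m M = 0)%R by rewrite /a -row_mul mulmx_ker row0.
move/eqP: Hr; apply; apply/rowP => p; idtac.
set i := idx p.
have E : (\sum_(k < m) a 0 k *: prod_map V s t (u k) i = 0)%R.
  under eq_bigr do rewrite cfP scaler_sumr.
  rewrite exchange_big /= big1 // => j _.
  under eq_bigr do rewrite scalerA.
  rewrite -scaler_suml.
  have -> : (\sum_(k < m) a 0 k * cf k j = (a *m M) 0 j)%R.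
    by rewrite [RHS]mxE; apply: eq_bigr => k _; rewrite [M _ _]mxE.
  by rewrite aM mxE scale0r.
have E' : (\sum_(k < m) a 0 k *: prod_map V s t (u k) i
           = a 0 p *: pm_map (V i) s t (g i))%R.
  rewrite (bigD1 p) //= big1 ?addr0.
    by rewrite /prod_map /u; case: excluded_middle_informative.
  move=> k /eqP nkp; rewrite /prod_map /u.
  destruct (excluded_middle_informative (i = idx k)) as [e|ne]; simpl; last by rewrite linear0 scaler0.
  by case: nkp; apply: idx_inj; rewrite -e.
move: E; rewrite E' => /eqP; rewrite scaler_eq0 => /orP [/eqP ha|/eqP h].
  by move: ha; rewrite /a !mxE => ->.
by case: (g_spec _ (idx_bad p)).
Qed.

Lemma finite_bad N :
  (forall L : seq I, List.NoDup L -> (forall i, List.In i L -> bad i) -> (size L <= N)%N) ->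
  exists J : seq I, forall i, bad i -> List.In i J.
Proof.
move=> HN; apply: NNPP => hn.
have step : forall k, exists L : seq I, [/\ List.NoDup L, (forall i, List.In i L -> bad i) & size L = k].
  elim=> [|k [L [nd hb sz]]]; first by exists [::]; split => //; constructor.
  have [i [bi ni]] : exists i, bad i /\ ~ List.In i L.
    apply: NNPP => h; apply: hn; exists L => i bi; apply: NNPP => ni; apply: h; by exists i.
  exists (i :: L); split => //=; last by rewrite sz.
  - by constructor.
  - by move=> j [<-|/hb].
have [L [nd hb sz]] := step N.+1.
by have := HN L nd hb; rewrite sz ltnn.
Qed.

End Bad.

Theorem lemma3p9 (K : fieldType) (n : nat) (I : Type) (V : I -> pmod K n) :
  prod_qtame V -> canon_weak_equiv V.
Proof.
move=> Hq; split.
  move=> s t _ x _ h0 i; by rewrite h0 linear0.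
move=> s t hst y.
have [xs Hxs] := Hq s t hst.
have [J HJ] := @finite_bad _ _ _ V s t _ (@bad_bound _ _ _ V s t xs Hxs).
exists (prod_map V s t y); split => //.
exists J => i ni; apply: NNPP => h; apply: ni; apply: HJ; by exists (y i).
Qed.
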